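(* For every positive integer $n$ there exists a positive integer $x$ such that the entry in row $x$, column $x-1$ of $T_2$ equals $n$. In particular every positive integer appears as an entry of $T_2$, and the sequence $a_2(n)=\min\{x\in\mathbb{N}: T_2(x,x-1)=n\}$ is defined for all positive integers $n$.
   Context: For a positive integer $m$, the triangle $T_m$ is an array whose row $x$ ($x=1,2,\dots$) has $x$ entries, in columns $0,\dots,x-1$. Row $1$ is the single entry $1$. For $x>1$, row $x$ is obtained from row $x-1$ by rotating it cyclically left by $m$ positions (the entry in column $c$ of row $x-1$ moves to column $(c-m)\bmod(x-1)\in\{0,\dots,x-2\}$ of row $x$), then appending in column $x-1$ a new entry equal to $1$ plus the entry in column $0$ of row $x-1$. $T_m(x,c)$ denotes the entry in row $x$, column $c$. Here $m=2$. *)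

(* Defs.v *)
From mathcomp Require Import all_boot.
Set Implicit Arguments. Unset Strict Implicit. Unset Printing Implicit Defensive.

(* The triangle T_m.  [Trow m k] is row k+1 of T_m, as a sequence of length k+1
   (columns 0..k). *)
Fixpoint Trow (m k : nat) : seq nat :=
  match k with
  | 0 => [:: 1]
  | k'.+1 =>
      let r := Trow m k' in
      rcons (rot (m %% k'.+1) r) (1 + nth 0 r 0)
  end.

Definition T (m x c : nat) : nat := nth 0 (Trow m x.-1) c.

(* Main.v *)
Require Import Defs.
From mathcomp Require Import all_boot.
From mathcomp Require Import zify.

Lemma size_Trow k : size (Trow 2 k) = k.+1.
Proof. elim: k => [//|k IH] /=; by rewrite size_rcons size_rot IH. Qed.

Lemma step_lo k i : 2 <= k -> i.+2 <= k ->
  nth 0 (Trow 2 k.+1) i = nth 0 (Trow 2 k) i.+2.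
Proof.
move=> hk hi /=.
rewrite modn_small; last lia.
rewrite nth_rcons size_rot size_Trow.
have -> : i < k.+1 by lia.
rewrite /rot nth_cat size_drop size_Trow.
have -> : i < k.+1 - 2 by lia.
by rewrite nth_drop.
Qed.

Lemma step_one k : 2 <= k -> nth 0 (Trow 2 k.+1) k = nth 0 (Trow 2 k) 1.
Proof.
move=> hk /=.
rewrite modn_small; last lia.
rewrite nth_rcons size_rot size_Trow ltnSn.
rewrite /rot nth_cat size_drop size_Trow.
have -> : (k < k.+1 - 2) = false by lia.
rewrite nth_take; last lia.
by congr nth; lia.
Qed.

Lemma reachA j : forall k c, 2 <= k -> c <= k -> c./2 = j ->
  nth 0 (Trow 2 (k + j)) (odd c) = nth 0 (Trow 2 k) c.
Proof.
elim: j => [|j IH] k c hk hc hj.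
  rewrite addn0; case: c hc hj => [|[|c]] //= _ ; rewrite ?uphalfE /=; lia.
have hc2 : 2 <= c by case: c hc hj => [|[|c]] //.
have -> : k + j.+1 = k.+1 + j by lia.
have -> : odd c = odd (c - 2) by rewrite -{1}(subnK hc2) oddD addbF.
rewrite (IH k.+1 (c - 2)); try lia.
- rewrite (_ : c - 2 = c.-2); last lia.
  rewrite step_lo; try lia.
  by have -> : c.-2.+2 = c by lia.
Qed.

Lemma reachA' k c : 2 <= k -> c <= k ->
  nth 0 (Trow 2 (k + c./2)) (odd c) = nth 0 (Trow 2 k) c.
Proof. move=> h1 h2; exact: reachA. Qed.

Lemma reachB a : forall k, 2 <= k -> ~~ (2 ^ a %| k.+1) ->
  exists k', nth 0 (Trow 2 k') 0 = nth 0 (Trow 2 k) 1.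
Proof.
elim: a => [|a IH] k hk hd; first by rewrite expn0 dvd1n in hd.
have H := reachA' k.+1 k ltac:(lia) ltac:(lia).
rewrite step_one // in H.
case ok : (odd k) H => H.
- have hs : ~~ (2 ^ a %| (k.+1 + k./2).+1).
    apply/negP => hd2; move/negP: hd; apply.
    have e : (k.+1 + k./2).+1 * 2 = 3 * k.+1.
      by rewrite -[in RHS](odd_double_half k) ok; lia.
    have : 2 ^ a.+1 %| 3 * k.+1 by rewrite -e expnSr dvdn_pmul2r.
    rewrite Gauss_dvdr // coprime_sym.
    by rewrite coprimeXr.
  have [k' Hk'] := IH (k.+1 + k./2) ltac:(lia) hs.
  by exists k'; rewrite Hk' H.
- by exists (k.+1 + k./2).
Qed.

Lemma reach k c : c <= k -> exists k', nth 0 (Trow 2 k') 0 = nth 0 (Trow 2 k) c.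
Proof.
move=> hc.
case: (leqP 2 k) => hk.
  have H := reachA' k c hk hc.
  case oc : (odd c) H => H; last by exists (k + c./2).
  have hs : ~~ (2 ^ (k + c./2).+1 %| (k + c./2).+1).
    apply/negP => /dvdn_leq h; have := h isT.
    have := ltn_expl (k + c./2).+1 (isT : 1 < 2); lia.
  have [k' Hk'] := reachB (k + c./2).+1 (k + c./2) ltac:(lia) hs.
  by exists k'; rewrite Hk'.
case: k hc hk => [|[|//]] hc _.
  by exists 0; case: c hc => [|//].
case: c hc => [|[|//]] _; first by exists 1.
have H := reachB 2 2 isT isT.
have [k' Hk'] := H; exists k'; rewrite Hk'; by [].
Qed.

Theorem mainTheorem6 :
  forall n : nat, 0 < n -> exists x : nat, 0 < x /\ T 2 x (x - 1) = n.
Proof.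
elim => [//|[|n] IH] _; first by exists 1.
have [x [hx hT]] := IH isT.
have [k' Hk'] := reach x.-1 (x - 1) ltac:(lia).
exists k'.+2; split => //.
rewrite /T /= subn1 /=.
rewrite nth_rcons size_rot size_Trow ltnn eqxx.
by rewrite Hk' -hT /T subn1.
Qed.
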